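(* Let $G=(V,E,w)$ be an instance of TSP, let $V_b$ be the set of bad vertices and $V_g=V\setminus V_b$ the set of good vertices, and assume $\min\{|V_g|,|V_b|\}\ge 3$. Let $o\in V_g$ be any good vertex, let $T_b^*$ be a minimum-weight TSP tour (Hamiltonian cycle) of the induced subgraph $G[V_b\cup\{o\}]$, and let $T_g^*$ be a minimum-weight TSP tour of $G[V_g]$. Then $\mathrm{OPT}\ge w(T_b^* )$ and $\mathrm{OPT}\ge w(T_g^* )$.
   Context: An instance of TSP is a complete graph $G=(V,E,w)$ with a symmetric non-negative edge-weight function $w$ (with $w(a,a)=0$). A TSP tour is a Hamiltonian cycle; its weight $w(\cdot)$ is the sum of its edge weights, and $\mathrm{OPT}$ is the minimum weight of a TSP tour of $G$. A triangle on three distinct vertices $a,b,c$ is violating if the three weights among them violate the triangle inequality (some side exceeds the sum of the other two). A vertex is bad if it belongs to some violating triangle, and good otherwise. *)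

(* Defs.v *)
From mathcomp Require Import all_boot all_order all_algebra.
Set Implicit Arguments. Unset Strict Implicit. Unset Printing Implicit Defensive.
Import Order.TTheory GRing.Theory Num.Theory.
Local Open Scope ring_scope.

Section TSP.
Variables (R : realDomainType) (V : finType) (w : V -> V -> R).

Definition tsp_instance : Prop :=
  [/\ forall a b, w a b = w b a, forall a b, 0 <= w a b & forall a, w a a = 0].

Definition violating (a b c : V) : bool :=
  [|| w a b > w a c + w c b, w a c > w a b + w b c | w b c > w b a + w a c].

Definition bad (a : V) : bool :=
  [exists b : V, exists c : V, [&& a != b, a != c, b != c & violating a b c]].

Definition bad_set : {set V} := [set v | bad v].
Definition good_set : {set V} := ~: bad_set.

(* A tour (Hamiltonian cycle) is represented by the cyclic sequence of its
   vertices; its weight is the sum of w over consecutive (cyclically) pairs. *)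
Definition tour_weight (s : seq V) : R := \sum_(x <- s) w x (next s x).

Definition is_tour (S : {set V}) (s : seq V) : Prop :=
  [/\ uniq s, (3 <= size s)%N & forall x, (x \in s) = (x \in S)].

Definition is_opt_tour (S : {set V}) (s : seq V) : Prop :=
  is_tour S s /\ forall t, is_tour S t -> tour_weight s <= tour_weight t.

End TSP.

(* Main.v *)
Require Import Defs.
From mathcomp Require Import all_boot all_order all_algebra.
Import Order.TTheory GRing.Theory Num.Theory.
Local Open Scope ring_scope.

Section Aux.
Variables (R : realDomainType) (V : finType) (w : V -> V -> R).
Hypothesis Hw : tsp_instance w.

Fixpoint pathw (x : V) (s : seq V) : R :=
  if s is y :: s' then w x y + pathw y s' else 0.

Lemma pathw_cat x s t : pathw x (s ++ t) = pathw x s + pathw (last x s) t.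
Proof. by elim: s x => [|y s IH] x /=; rewrite ?add0r // IH addrA. Qed.

Lemma pathw_rcons x s y : pathw x (rcons s y) = pathw x s + w (last x s) y.
Proof. by rewrite -cats1 pathw_cat /= addr0. Qed.

Lemma pathw_ge0 x s : 0 <= pathw x s.
Proof.
case: Hw => _ H0 _.
by elim: s x => [|y s IH] x //=; rewrite addr_ge0.
Qed.

Definition goodv v := v \in good_set w.

Lemma tri x y z : goodv x || goodv y || goodv z -> w x z <= w x y + w y z.
Proof.
case: Hw => Hs H0 Hd.
have [->|nxy] := eqVneq x y; first by rewrite Hd add0r.
have [->|nyz] := eqVneq y z; first by rewrite Hd addr0.
have [->|nxz] := eqVneq x z; first by rewrite Hd addr_ge0.
move=> Hg; rewrite leNgt; apply/negP => Hlt.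
move: Hg; rewrite /goodv /good_set /bad_set !inE.
have bx : bad w x.
  apply/existsP; exists z; apply/existsP; exists y.
  by rewrite nxz nxy eq_sym nyz /violating Hlt.
have by_ : bad w y.
  apply/existsP; exists x; apply/existsP; exists z.
  by rewrite eq_sym nxy nyz nxz /violating Hlt !orbT.
have bz : bad w z.
  apply/existsP; exists x; apply/existsP; exists y.
  rewrite eq_sym nxz eq_sym nyz nxy /violating.
  by rewrite (Hs z x) (Hs z y) (Hs y x) addrC Hlt.
by rewrite bx by_ bz.
Qed.

Lemma shortcut xs a b : goodv a || all goodv xs -> w a b <= pathw a (rcons xs b).
Proof.
elim/last_ind: xs b => [|xs y IH] b.
  by move=> _ /=; rewrite addr0.
rewrite all_rcons => Hg.
rewrite pathw_rcons last_rcons.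
apply: le_trans (@tri a y b _) _.
  by case/orP: Hg => [->|/andP[->]] //; rewrite orbT.
rewrite lerD2r; apply: IH.
by case/orP: Hg => [->|/andP[_ ->]] //; rewrite orbT.
Qed.

Variable p : pred V.
Hypothesis HP : (forall z, p z -> goodv z) \/ (forall z, ~~ p z -> goodv z).

Lemma filt t : forall x xs, p x -> all (predC p) xs -> p (last x t) ->
  pathw x (filter p t) <= pathw x (xs ++ t).
Proof.
elim: t => [|y t IH] x xs px Hxs /= Hl.
  exact: pathw_ge0.
case: ifP => py.
  rewrite -cat_rcons pathw_cat last_rcons /=.
  apply: lerD; first apply: shortcut.
    case: HP => H; first by rewrite H.
    by apply/orP; right; apply/allP => z /(allP Hxs) /H.
  by apply: (IH y [::]).
rewrite -cat_rcons; apply: IH => //.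
  by rewrite all_rcons /= py.
by case: t Hl => [|z t] /=; rewrite ?py.
Qed.

Lemma tw_gen y0 t : forall x, uniq (x :: t) ->
  \sum_(z <- x :: t) w z (next_at z y0 x t) = pathw x (rcons t y0).
Proof.
elim: t => [|y t IH] x Hu.
  by rewrite big_seq1 /= eqxx addr0.
rewrite big_cons /= eqxx.
rewrite (eq_big_seq (fun z => w z (next_at z y0 y t))); last first.
  move=> z zin /=; case: eqP => // ez; subst z.
  by move: Hu => /= /andP[]; rewrite zin.
rewrite IH //; by case/andP: Hu.
Qed.

Lemma tw_cons x t : uniq (x :: t) -> tour_weight w (x :: t) = pathw x (rcons t x).
Proof. by move=> Hu; rewrite /tour_weight /next tw_gen. Qed.

Lemma restrict (S : {set V}) (o : V) (T : seq V) :
  p =1 mem S -> o \in S -> (3 <= #|S|)%N -> is_tour [set: V] T ->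
  exists T', is_tour S T' /\ tour_weight w T' <= tour_weight w T.
Proof.
move=> pS oS cS [uT sT mT].
have oT : o \in T by rewrite mT inE.
have uTr : uniq (rot (index o T) T) by rewrite rot_uniq.
have tTr : tour_weight w (rot (index o T) T) = tour_weight w T.
  have pr : perm_eq (rot (index o T) T) T by rewrite perm_rot.
  rewrite /tour_weight (perm_big _ pr) /=.
  by apply: eq_bigr => x _; rewrite next_rot.
move: uTr tTr; rewrite rot_index //.
set t := (drop _ _ ++ _) => uTr tTr.
have po : p o by rewrite pS.
exists (o :: filter p t).
have uf : uniq (o :: filter p t).
  by move: uTr; rewrite /= mem_filter => /andP[no ut]; rewrite filter_uniq // andbT negb_and no orbT.
have memf : forall x, (x \in o :: filter p t) = (x \in S).
  move=> x; rewrite inE mem_filter pS.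
  have : x \in o :: t by rewrite -(rot_index oT) mem_rot mT inE.
  by rewrite inE; case: eqP => [->|_] //= ->; rewrite andbT.
split.
  split => //.
  rewrite -(card_uniqP uf).
  by rewrite (eq_card (B := S)) //.
rewrite -tTr !tw_cons //.
have -> : rcons (filter p t) o = filter p (rcons t o) by rewrite filter_rcons po.
rewrite -[rcons t o]cat0s.
apply: filt => //; by rewrite last_rcons.
Qed.

End Aux.

Theorem lemma1 (R : realDomainType) (V : finType) (w : V -> V -> R)
  (o : V) (Tb Tg Topt : seq V) :
  tsp_instance w ->
  (3 <= minn #|good_set w| #|bad_set w|)%N ->
  o \in good_set w ->
  is_opt_tour w (o |: bad_set w) Tb ->
  is_opt_tour w (good_set w) Tg ->
  is_opt_tour w [set: V] Topt ->
  tour_weight w Tb <= tour_weight w Topt /\ tour_weight w Tg <= tour_weight w Topt.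
Proof.
move=> Hw; rewrite leq_min => /andP[cg cb] og [_ Hb] [_ Hg] [tO _].
split.
  have HP : (forall z, mem (o |: bad_set w) z -> @goodv R V w z) \/
            (forall z, ~~ mem (o |: bad_set w) z -> @goodv R V w z).
    right => z /=; rewrite inE negb_or => /andP[_ zb].
    by rewrite /goodv /good_set inE.
  have cS : (3 <= #|o |: bad_set w|)%N.
    by apply: leq_trans cb _; apply: subset_leq_card; apply: subsetUr.
  have [T' [tT' le']] := @restrict R V w Hw _ HP (o |: bad_set w) o Topt
     (fun _ => erefl) (setU11 _ _) cS tO.
  exact: le_trans (Hb _ tT') le'.
have HP : (forall z, mem (good_set w) z -> @goodv R V w z) \/
          (forall z, ~~ mem (good_set w) z -> @goodv R V w z) by left.
have [T' [tT' le']] := @restrict R V w Hw _ HP (good_set w) o Topt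
   (fun _ => erefl) og cg tO.
exact: le_trans (Hg _ tT') le'.
Qed.
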